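(* Let $\epsilon\ge0$ and let $Q:\mathbb{R}\to\Delta(\mathbb{R})$ be a mechanism of the form $Qu=u+V$, where $V$ is a real random variable with distribution independent of $u$. If $Q$ is $\epsilon$-Lipschitz private with respect to the metric $|u-u'|$ on $\mathbb{R}$, then $V$ possesses a density (its distribution is absolutely continuous with respect to Lebesgue measure).
   Context: $\Delta(\mathbb{R})$ denotes the set of Borel probability measures on $\mathbb{R}$. A mechanism $Q:\mathbb{R}\to\Delta(\mathbb{R})$ is $\epsilon$-Lipschitz private if for all $u,u'\in\mathbb{R}$ and all Borel $\mathcal{S}\subseteq\mathbb{R}$, $|\ln\mathbb{P}(Qu\in\mathcal{S})-\ln\mathbb{P}(Qu'\in\mathcal{S})|\le\epsilon|u-u'|$, equivalently $\mathbb{P}(Qu\in\mathcal{S})\le e^{\epsilon|u-u'|}\mathbb{P}(Qu'\in\mathcal{S})$. *)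

(* Defs.v *)
From HB Require Import structures.
From mathcomp Require Import all_boot all_order all_algebra.
From mathcomp Require Import all_classical all_reals all_analysis.
Set Implicit Arguments. Unset Strict Implicit. Unset Printing Implicit Defensive.
Import Order.TTheory GRing.Theory Num.Theory.
Local Open Scope classical_set_scope.
Local Open Scope ring_scope.

(* A mechanism Q : R -> Delta(R), each Q u being a probability measure on the
   Borel sets of R, given as set functions. *)
Definition lipschitz_private (R : realType) (eps : R)
  (Q : R -> set (measurableTypeR R) -> \bar R) : Prop :=
  forall (u u' : R) (S : set (measurableTypeR R)), measurable S ->
    (Q u S <= (expR (eps * `|u - u'|))%:E * Q u' S)%E.

(* The additive-noise mechanism Q u = u + V where V has distribution P:
   Q u S = P (V in S) = P {v | u + v \in S}. *)
Definition additive_mechanism (R : realType)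
  (P : probability (measurableTypeR R) R) (u : R) : set (measurableTypeR R) -> \bar R :=
  pushforward P (fun v : measurableTypeR R => u + v).

(* Main.v *)
Require Import Defs.
From HB Require Import structures.
From mathcomp Require Import all_boot all_order all_algebra.
From mathcomp Require Import all_classical all_reals all_analysis.
Import Order.TTheory GRing.Theory Num.Theory.
Local Open Scope classical_set_scope.
Local Open Scope ring_scope.

Lemma mshift (R : realType) (c : R) : measurable_fun [set: measurableTypeR R] (fun x : measurableTypeR R => (x + c : measurableTypeR R)).
Proof. apply: measurable_realfun.measurable_funD => //. Qed.

Lemma leb_shift (R : realType) (c : R) (A : set (measurableTypeR R)) : measurable A ->
  lebesgue_measure A = lebesgue_measure ((fun x : measurableTypeR R => (x + c : measurableTypeR R)) @^-1` A).
Proof.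
move=> mA.
unshelve epose proof (@lebesgue_measure_unique R (pushforward lebesgue_measure (fun x : measurableTypeR R => (x + c : measurableTypeR R))) _ A mA) as H.
  exact: mshift.
2: exact H.
move=> X /ocitvP [->|[[a b]/= ab ->]].
  by rewrite !measure0.
rewrite /pushforward.
have -> : (fun x : measurableTypeR R => (x + c : measurableTypeR R)) @^-1` `]a, b]%classic = `](a - c), (b - c)]%classic.
  apply/seteqP; split => x /=; rewrite !in_itv /= ?ltrBlDr ?lerBrDr //.
rewrite !lebesgue_measure_itv /= !lte_fin ab ltrD2r ab.
by rewrite -!EFinD opprB addrA subrK.
Qed.

Theorem lemma1 (R : realType) (eps : R) (P : probability (measurableTypeR R) R) :
  0 <= eps ->
  lipschitz_private eps (additive_mechanism P) ->
  P `<< (@lebesgue_measure R).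
Proof.
move=> eps0 Hpriv N0' Nnull N mN NN0.
have N0 := Nnull N mN NN0.
set T := measurableTypeR R.
pose A : set (T * T) := [set p | N (p.2 + p.1) /\ `[0, 1]%classic p.2].
have mf : measurable_fun [set: T * T] (fun p : T * T => (p.2 + p.1 : T)).
  exact: measurable_realfun.measurable_funD.
have mA : measurable A.
  have -> : A = ((fun p : T * T => (p.2 + p.1 : T)) @^-1` N) `&` (snd @^-1` `[0, 1]%classic).
    by apply/seteqP; split => p /=.
  apply: measurableI.
    by have := mf measurableT _ mN; rewrite setTI.
  by have := @measurable_snd _ _ T T measurableT _ (measurable_itv `[0, 1]); rewrite setTI.
have H := indic_fubini_tonelli P lebesgue_measure mA.
rewrite indic_fubini_tonelli_FE // indic_fubini_tonelli_GE // in H.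
have L0 : (\int[P]_x (lebesgue_measure \o xsection A) x = 0)%E.
  apply: integral0_eq => x _ /=.
  apply/eqP; rewrite eq_le measure_ge0 andbT.
  rewrite -N0 (@leb_shift R x N mN).
  apply: le_measure; rewrite ?inE.
  - exact: measurable_xsection.
  - by have := @mshift R x measurableT _ mN; rewrite setTI.
  - by move=> y /xsectionP [].
rewrite L0 in H.
apply/eqP; rewrite eq_le measure_ge0 andbT.
have mG := measurable_fun_ysection P mA.
have I01 : measurable (`[0, 1]%classic : set T) by exact: measurable_itv.
have pt : forall y : T, `[0, 1]%classic y -> (P N <= (expR eps)%:E * (P \o ysection A) y)%E.
  move=> y y01.
  have := Hpriv 0 y N mN; rewrite /additive_mechanism /pushforward.
  have -> : (fun v : T => (0 : T) + v) @^-1` N = N.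
    by apply/seteqP; split => v /=; rewrite add0r.
  move/le_trans; apply.
  have -> : (fun v : T => y + v) @^-1` N = ysection A y.
    apply/seteqP; split => v /=; rewrite /ysection /A /= inE.
      by move=> Hv; split.
    by case.
  apply: lee_pmul => //; rewrite lee_fin ?expR_ge0 // ler_expR.
  move: y01; rewrite /= in_itv /= => /andP[y0 y1].
  by rewrite sub0r normrN ger0_norm // ler_piMr.
have L1 : (P N <= \int[lebesgue_measure]_(y in (`[0%R, 1%R]%classic : set T)) ((expR eps)%:E * (P \o ysection A) y))%E.
  have -> : P N = (\int[lebesgue_measure]_(y in (`[0%R, 1%R]%classic : set T)) cst (P N) y)%E.
    rewrite integral_cst //.
    have L : lebesgue_measure (`[0%R, 1%R]%classic : set T) = 1%E.
      by rewrite lebesgue_measure_itv /= lte01 -EFinB subr0.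
    by rewrite -[LHS]mule1; congr (_ * _)%E; rewrite -L.
  refine (ge0_le_integral _ I01 _ _ _ _) => //.
  apply: emeasurable_funM; first exact: measurable_cst.
  move=> _ Y mY; apply: measurableI => //; have := mG measurableT Y mY; rewrite setTI; exact.
rewrite ge0_integralZl // in L1; last first.
  move=> _ Y mY; apply: measurableI => //; have := mG measurableT Y mY; rewrite setTI; exact.
apply: (le_trans L1).
rewrite -[leRHS](mule0 (expR eps)%:E) H.
apply: lee_pmul => //.
  by apply: integral_ge0 => y _; exact: measure_ge0.
by apply: ge0_subset_integral => //.
Qed.
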